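(* Let $\mathcal{H}_o=(V,\vec H,\bm{w})$ be a strongly connected weighted oriented hypergraph with $|V|\ge2$. For all distinct $u,v\in V$ and all $\alpha\in[0,1)$, $$\frac{\kappa_\alpha(u,v)}{1-\alpha}\le\frac{2\max_{h\in\vec H}w_h}{d(u,v)}.$$
   Context: A weighted oriented hypergraph $(V,\vec H,\bm w)$ has a finite vertex set $V$, a finite set $\vec H$ of hyperedges, each an ordered pair $h=(A_h,B_h)$ of nonempty subsets of $V$ with $A_h\cap B_h=\emptyset$, such that for every $h\in\vec H$ its reversal $h^-=(B_h,A_h)$ also belongs to $\vec H$, and positive weights with $w_h=w_{h^-}$. A directed path from $u$ to $v$ is a sequence of hyperedges $h_1,\dots,h_l$ with $u\in A_{h_1}$, $v\in B_{h_l}$, $B_{h_j}\cap A_{h_{j+1}}\ne\emptyset$; strongly connected means such a path exists for all distinct $u,v$. $d(u,v)=\inf_\gamma\sum_{h\in\gamma}w_h$ over directed paths from $u$ to $v$ ($u\ne v$), $d(u,u)=0$. $\Gamma(v)=\{z:\exists h\in\vec H\text{ with }v\in A_h,z\in B_h\}$. For $\alpha\in[0,1]$: $\mu^\alpha_{u^{in}}(u)=\alpha$, $\mu^\alpha_{u^{in}}(z)=(1-\alpha)\sum_{h':u\in B_{h'},z\in A_{h'}}\frac{1}{|A_{h'}|}\frac{w_{h'}}{\sum_{h'':u\in B_{h''}}w_{h''}}$ for $z\in\Gamma(u)$, $0$ otherwise; $\mu^\alpha_{v^{out}}(v)=\alpha$, $\mu^\alpha_{v^{out}}(z)=(1-\alpha)\sum_{h':v\in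 A_{h'},z\in B_{h'}}\frac{1}{|B_{h'}|}\frac{w_{h'}}{\sum_{h'':v\in A_{h''}}w_{h''}}$ for $z\in\Gamma(v)$, $0$ otherwise. $W(\mu,\nu)=\inf_\pi\sum_{x,y}\pi(x,y)d(x,y)$ over couplings $\pi$ of $\mu,\nu$. For distinct $u,v$: $\kappa_\alpha(u,v)=1-W(\mu^\alpha_{u^{in}},\mu^\alpha_{v^{out}})/d(u,v)$. *)

(* Defs.v *)
From HB Require Import structures.
From mathcomp Require Import all_boot all_order all_algebra.
From mathcomp Require Import reals.
Set Implicit Arguments. Unset Strict Implicit. Unset Printing Implicit Defensive.
Import Order.TTheory GRing.Theory Num.Theory.
Local Open Scope ring_scope.


Section OrientedHypergraph.
Variables (R : realType) (V : finType).

Definition hedge := ({set V} * {set V})%type.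
Definition hA (h : hedge) : {set V} := h.1.
Definition hB (h : hedge) : {set V} := h.2.
Definition hrev (h : hedge) : hedge := (h.2, h.1).

Definition is_woh (H : {set hedge}) (w : hedge -> R) : Prop :=
  forall h, h \in H ->
    [/\ hA h != set0, hB h != set0, [disjoint hA h & hB h],
        hrev h \in H & (0 < w h /\ w (hrev h) = w h)].

Definition dpath (H : {set hedge}) (u v : V) (p : seq hedge) : Prop :=
  match p with
  | [::] => False
  | h1 :: _ =>
      [/\ all (fun h => h \in H) p, u \in hA h1, v \in hB (last h1 p)
        & forall j, (j.+1 < size p)%N ->
            hB (nth h1 p j) :&: hA (nth h1 p j.+1) != set0]
  end.

Definition strongly_connected (H : {set hedge}) : Prop :=
  forall u v : V, u != v -> exists p, dpath H u v p.

Definition path_weight (w : hedge -> R) (p : seq hedge) : R :=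
  \sum_(h <- p) w h.

Definition hdist (H : {set hedge}) (w : hedge -> R) (u v : V) : R :=
  if u == v then 0
  else reals.inf (fun x : R => exists p, dpath H u v p /\ x = path_weight w p).

Definition Gamma (H : {set hedge}) (v : V) : {set V} :=
  [set z | [exists h in H, (v \in hA h) && (z \in hB h)]].

Definition mu_in (H : {set hedge}) (w : hedge -> R) (alpha : R) (u z : V) : R :=
  if z == u then alpha
  else if z \in Gamma H u then
    (1 - alpha) * \sum_(h in H | (u \in hB h) && (z \in hA h))
        ((#|hA h|%:R)^-1 * (w h / \sum_(h' in H | u \in hB h') w h'))
  else 0.

Definition mu_out (H : {set hedge}) (w : hedge -> R) (alpha : R) (v z : V) : R :=
  if z == v then alpha
  else if z \in Gamma H v then
    (1 - alpha) * \sum_(h in H | (v \in hA h) && (z \in hB h))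
        ((#|hB h|%:R)^-1 * (w h / \sum_(h' in H | v \in hA h') w h'))
  else 0.

Definition coupling (mu nu : V -> R) (pi : V -> V -> R) : Prop :=
  [/\ forall x y, 0 <= pi x y,
      forall x, \sum_y pi x y = mu x
    & forall y, \sum_x pi x y = nu y].

Definition wasserstein (H : {set hedge}) (w : hedge -> R) (mu nu : V -> R) : R :=
  reals.inf (fun c : R => exists pi, coupling mu nu pi /\
         c = \sum_x \sum_y pi x y * hdist H w x y).

Definition kappa (H : {set hedge}) (w : hedge -> R) (alpha : R) (u v : V) : R :=
  1 - wasserstein H w (mu_in H w alpha u) (mu_out H w alpha v) / hdist H w u v.

Definition max_weight (H : {set hedge}) (w : hedge -> R) : R :=
  \big[Num.max/0]_(h in H) w h.

End OrientedHypergraph.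

(* Main.v *)
Require Import Defs.
From HB Require Import structures.
From mathcomp Require Import all_boot all_order all_algebra.
From mathcomp Require Import reals classical_sets.
From mathcomp Require Import ring lra.
Import Order.TTheory GRing.Theory Num.Theory.
Local Open Scope ring_scope.
Set Implicit Arguments. Unset Strict Implicit.

Section S.
Variables (R : realType) (V : finType) (H : {set hedge V}) (w : hedge V -> R).
Hypothesis hW : is_woh H w.
Hypothesis hSC : strongly_connected H.

Definition M := max_weight H w.
Definition mw := \big[Num.min/1]_(h in H) w h.

Lemma wpos h : h \in H -> 0 < w h.
Proof. by move=> /hW [_ _ _ _ []]. Qed.

Lemma le_M h : h \in H -> w h <= M.
Proof. move=> hH; rewrite /M /max_weight (bigD1 h) //=. by rewrite le_max lexx. Qed.

Lemma M_ge0 : 0 <= M.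
Proof. rewrite /M /max_weight; elim/big_ind: _ => //= [x y hx _|h /wpos/ltW //]; by rewrite le_max hx. Qed.

Lemma mw_pos : 0 < mw.
Proof. rewrite /mw; elim/big_ind: _ => //= [x y hx hy|h /wpos //]. by rewrite lt_min hx hy. Qed.

Lemma mw_le h : h \in H -> mw <= w h.
Proof. move=> hH; rewrite /mw (bigD1 h) //=. by rewrite ge_min lexx. Qed.

Lemma pw_ge0 p : all (fun h => h \in H) p -> 0 <= path_weight w p.
Proof.
rewrite /path_weight; elim: p => [|h p IH] /=; first by rewrite big_nil.
move=> /andP [hH hp]; rewrite big_cons addr_ge0 ?IH //. exact/ltW/wpos.
Qed.

Lemma pw_gt x y p : dpath H x y p -> mw <= path_weight w p.
Proof.
case: p => [//|h p] [hall _ _ _]; rewrite /path_weight big_cons.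
move: hall => /= /andP [hH hp].
rewrite -[mw]addr0 lerD ?mw_le //. exact: pw_ge0.
Qed.

Lemma nth_cat1 (T : Type) (x0 : T) s1 s2 i : (i < size s1)%N -> nth x0 (s1 ++ s2) i = nth x0 s1 i.
Proof. by move=> hi; rewrite nth_cat hi. Qed.

Lemma nth_cat2 (T : Type) (x0 x1 : T) s1 s2 i : (size s1 <= i)%N -> (i < size s1 + size s2)%N ->
  nth x0 (s1 ++ s2) i = nth x1 s2 (i - size s1).
Proof.
move=> h1 h2; rewrite nth_cat ltnNge h1 /=; apply: set_nth_default.
by rewrite ltn_subLR.
Qed.

Lemma dpath_cat x y z p q : dpath H x y p -> dpath H y z q -> dpath H x z (p ++ q).
Proof.
case: p => [//|h1 p] [ap xA yB adjp].
case: q => [//|k1 q] [aq yA zB adjq].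
split.
- by rewrite all_cat ap aq.
- done.
- by rewrite last_cat.
move=> j hj; move: (hj); rewrite size_cat => hj'.
case: (ltnP j.+1 (size (h1::p))) => h.
  by rewrite !(nth_cat1 _ _ h) ?(nth_cat1 _ _ (ltnW h)); exact: adjp.
case: (ltnP j (size (h1::p))) => h'.
  have ej : j = size p.
    by move: h h'; rewrite /= ltnS => h h'; apply/eqP; rewrite eqn_leq h -ltnS h'.
  rewrite (nth_cat1 _ _ h') (nth_cat2 h1 k1 h hj') ej.
  have -> : ((size p).+1 - size (h1 :: p) = 0)%N by rewrite /= subnn.
  rewrite nth_last /=.
  by apply/set0Pn; exists y; rewrite inE yB yA.
rewrite (nth_cat2 h1 k1 h' (ltnW hj')) (nth_cat2 h1 k1 h hj') subSn //.
apply: adjq; rewrite -subSn // ltn_subLR //.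
Qed.

Definition Sp x y := fun c : R => exists p, dpath H x y p /\ c = path_weight w p.

Lemma dpath_all x y p : dpath H x y p -> all (fun h => h \in H) p.
Proof. by case: p => [//|h p] []. Qed.

Lemma Sp_lb x y : has_lbound (Sp x y).
Proof. exists 0 => c [p [hp ->]]; exact/pw_ge0/(dpath_all hp). Qed.

Lemma Sp_ne x y : x != y -> nonempty (Sp x y).
Proof. by move=> /hSC [p hp]; exists (path_weight w p), p. Qed.

Lemma hdistE x y : x != y -> hdist H w x y = inf (Sp x y).
Proof. by rewrite /hdist => /negbTE ->. Qed.

Lemma d_xx x : hdist H w x x = 0.
Proof. by rewrite /hdist eqxx. Qed.

Lemma d_gt x y : x != y -> mw <= hdist H w x y.
Proof.
move=> nxy; rewrite hdistE //; apply: lb_le_inf; first exact: Sp_ne.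
by move=> c [p [hp ->]]; exact: pw_gt hp.
Qed.

Lemma d_ge0 x y : 0 <= hdist H w x y.
Proof.
case: (eqVneq x y) => [->|nxy]; first by rewrite d_xx.
exact/(le_trans (ltW mw_pos))/d_gt.
Qed.

Lemma d_le_path x y p : dpath H x y p -> hdist H w x y <= path_weight w p.
Proof.
move=> hp; case: (eqVneq x y) => [->|nxy].
  by rewrite d_xx; exact/pw_ge0/(dpath_all hp).
by rewrite hdistE //; apply: ge_inf; [exact: Sp_lb | exists p].
Qed.

Lemma d_le_edge h x y : h \in H -> x \in hA h -> y \in hB h -> hdist H w x y <= w h.
Proof.
move=> hH xA yB; have -> : w h = path_weight w [:: h] by rewrite /path_weight big_seq1.
apply: d_le_path; split => //=; first by rewrite hH.
Qed.

Lemma d_tri x y z : hdist H w x z <= hdist H w x y + hdist H w y z.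
Proof.
case: (eqVneq x z) => [->|nxz]; first by rewrite d_xx addr_ge0 ?d_ge0.
case: (eqVneq x y) => [<-|nxy]; first by rewrite d_xx add0r.
case: (eqVneq y z) => [->|nyz]; first by rewrite d_xx addr0.
rewrite -lerBlDr [hdist H w x y]hdistE //; apply: lb_le_inf; first exact: Sp_ne.
move=> c [p [hp ->]]; rewrite lerBlDr addrC -lerBlDr [hdist H w y z]hdistE //.
apply: lb_le_inf; first exact: Sp_ne.
move=> c' [q [hq ->]]; rewrite lerBlDr addrC.
have -> : path_weight w p + path_weight w q = path_weight w (p ++ q) by rewrite /path_weight big_cat.
exact/d_le_path/(dpath_cat hp hq).
Qed.

Lemma mass (a b : hedge V -> {set V}) (u : V) (alpha : R) :
  (forall h, h \in H -> [disjoint a h & b h]) -> (forall h, h \in H -> b h != finset.set0) ->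
  (exists2 h, h \in H & u \in a h) ->
  (forall h z, h \in H -> u \in a h -> z \in b h -> z \in Gamma H u) ->
  \sum_(z | z != u) (if z \in Gamma H u then (1 - alpha) *
      \sum_(h in H | (u \in a h) && (z \in b h))
        ((#|b h|%:R)^-1 * (w h / \sum_(h' in H | u \in a h') w h')) else 0)
  = 1 - alpha.
Proof.
move=> hdisj hne [h0 h0H uh0] hG.
set S := \sum_(h' in H | u \in a h') w h'.
have Spos : 0 < S.
  rewrite /S (bigD1 h0) /=; last by rewrite h0H uh0.
  rewrite ltr_pwDl ?wpos // sumr_ge0 // => h /andP [/andP [hH _] _]; exact/ltW/wpos.
set c := fun h => (#|b h|%:R)^-1 * (w h / S).
set F := fun z => \sum_(h in H | (u \in a h) && (z \in b h)) c h.
have Fu : F u = 0.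
  rewrite /F big_pred0 // => h; apply/negbTE/negP => /andP [hH /andP [ua ub]].
  by move: (hdisj h hH) => /disjoint_setI0 /setP /(_ u); rewrite inE ua ub inE.
have -> : \sum_(z | z != u) (if z \in Gamma H u then (1 - alpha) * F z else 0)
        = \sum_z (1 - alpha) * F z.
  rewrite [RHS](bigD1 u) //= Fu mulr0 add0r; apply: eq_bigr => z nzu.
  case: ifP => // zG; rewrite /F big_pred0 ?mulr0 // => h.
  apply/negbTE/negP => /andP [hH /andP [ua zb]].
  by move: (hG h z hH ua zb); rewrite zG.
rewrite -big_distrr /=.
have -> : \sum_z F z = 1; last by rewrite mulr1.
have -> : \sum_z F z = \sum_z \sum_h (if (h \in H) && (u \in a h) then (if z \in b h then c h else 0) else 0).
  apply: eq_bigr => z _; rewrite /F big_mkcond; apply: eq_bigr => h _.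
  by case: (h \in H); case: (u \in a h); case: (z \in b h).
rewrite exchange_big /=.
have -> : \sum_h \sum_z (if (h \in H) && (u \in a h) then (if z \in b h then c h else 0) else 0)
   = \sum_(h in H | u \in a h) w h / S.
  rewrite [RHS]big_mkcond; apply: eq_bigr => h _.
  case: ifP => [/andP [hH _]|_]; last by rewrite big1.
  rewrite -big_mkcond /= sumr_const /c.
  have cn : (#|b h|%:R : R) != 0 by rewrite pnatr_eq0 -lt0n card_gt0 hne.
  by rewrite -mulrnAl -mulr_natr mulVf // mul1r.
by rewrite -mulr_suml divff // gt_eqF.
Qed.


Lemma exists_other (u : V) : (2 <= #|V|)%N -> exists x, x != u.
Proof.
move=> hV; have : (0 < #|predC1 u|)%N by rewrite cardC1; case: #|V| hV => [|[|n]].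
by case/card_gt0P => x; rewrite inE => hx; exists x.
Qed.

Lemma in_hB (u : V) : (2 <= #|V|)%N -> exists2 h, h \in H & u \in hB h.
Proof.
move=> /(exists_other u) [x nxu]; have [p hp] := hSC nxu.
case: p hp => [//|h1 p] hp; have := hp => -[ap _ uB _].
exists (last h1 (h1 :: p)) => //; apply: (allP ap) => /=; exact: mem_last.
Qed.

Lemma in_hA (u : V) : (2 <= #|V|)%N -> exists2 h, h \in H & u \in hA h.
Proof.
move=> /(exists_other u) [x]; rewrite eq_sym => nux; have [p hp] := hSC nux.
case: p hp => [//|h1 p] hp; have := hp => -[ap uA _ _].
by exists h1 => //; move: ap => /= /andP [].
Qed.

Lemma GammaP u z : reflect (exists2 h, h \in H & (u \in hA h) && (z \in hB h)) (z \in Gamma H u).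
Proof.
rewrite /Gamma inE; apply: (iffP existsP) => [[h /andP [hH P]]|[h hH P]]; first by exists h.
by exists h; rewrite hH.
Qed.

Lemma Gamma_d u z : z \in Gamma H u -> hdist H w u z <= M /\ hdist H w z u <= M.
Proof.
move=> /GammaP [h hH /andP [uA zB]]; have [_ _ _ rH [_ wr]] := hW hH.
split; first exact: le_trans (d_le_edge hH uA zB) (le_M hH).
apply: (@le_trans _ _ (w (hrev h))); first exact: d_le_edge.
by rewrite wr; exact: le_M.
Qed.

Lemma mu_in_ge0 alpha u z : 0 <= alpha -> alpha <= 1 -> 0 <= mu_in H w alpha u z.
Proof.
move=> a0 a1; rewrite /mu_in; case: ifP => // _; case: ifP => // _.
rewrite mulr_ge0 ?subr_ge0 // sumr_ge0 // => h /andP [hH _].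
rewrite mulr_ge0 ?invr_ge0 ?ler0n // divr_ge0 ?sumr_ge0 //; first exact/ltW/wpos.
by move=> h' /andP [h'H _]; exact/ltW/wpos.
Qed.

Lemma mu_out_ge0 alpha u z : 0 <= alpha -> alpha <= 1 -> 0 <= mu_out H w alpha u z.
Proof.
move=> a0 a1; rewrite /mu_out; case: ifP => // _; case: ifP => // _.
rewrite mulr_ge0 ?subr_ge0 // sumr_ge0 // => h /andP [hH _].
rewrite mulr_ge0 ?invr_ge0 ?ler0n // divr_ge0 ?sumr_ge0 //; first exact/ltW/wpos.
by move=> h' /andP [h'H _]; exact/ltW/wpos.
Qed.

Lemma mu_in_sum alpha u : (2 <= #|V|)%N -> \sum_z mu_in H w alpha u z = 1.
Proof.
move=> hV; rewrite (bigD1 u) //= {1}/mu_in eqxx.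
have -> : \sum_(z | z != u) mu_in H w alpha u z =
  \sum_(z | z != u) (if z \in Gamma H u then (1 - alpha) *
      \sum_(h in H | (u \in hB h) && (z \in hA h))
        ((#|hA h|%:R)^-1 * (w h / \sum_(h' in H | u \in hB h') w h')) else 0).
  by apply: eq_bigr => z nz; rewrite /mu_in (negbTE nz).
rewrite mass; first by rewrite addrC subrK.
- by move=> h /hW [_ _ d _ _]; rewrite disjoint_sym.
- by move=> h /hW [].
- exact: in_hB.
move=> h z hH uB zA; have [_ _ _ rH _] := hW hH; apply/GammaP; exists (hrev h) => //.
by rewrite /hA /hB /hrev /= uB zA.
Qed.

Lemma mu_out_sum alpha u : (2 <= #|V|)%N -> \sum_z mu_out H w alpha u z = 1.
Proof.
move=> hV; rewrite (bigD1 u) //= {1}/mu_out eqxx.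
have -> : \sum_(z | z != u) mu_out H w alpha u z =
  \sum_(z | z != u) (if z \in Gamma H u then (1 - alpha) *
      \sum_(h in H | (u \in hA h) && (z \in hB h))
        ((#|hB h|%:R)^-1 * (w h / \sum_(h' in H | u \in hA h') w h')) else 0).
  by apply: eq_bigr => z nz; rewrite /mu_out (negbTE nz).
rewrite mass; first by rewrite addrC subrK.
- by move=> h /hW [].
- by move=> h /hW [].
- exact: in_hA.
move=> h z hH uA zB; apply/GammaP; exists h => //; by rewrite uA zB.
Qed.

Lemma wsum_le (mu f : V -> R) u alpha K : (forall x, 0 <= mu x) -> \sum_x mu x = 1 ->
  mu u = alpha -> f u = 0 -> (forall x, x != u -> mu x != 0 -> f x <= K) ->
  \sum_x mu x * f x <= (1 - alpha) * K.
Proof.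
move=> m0 ms mu_u fu hf; rewrite (bigD1 u) //= fu mulr0 add0r.
have <- : \sum_(x | x != u) mu x = 1 - alpha.
  by move: ms; rewrite (bigD1 u) //= mu_u => <-; rewrite addrC addrK.
rewrite mulr_suml; apply: ler_sum => x nx.
case: (eqVneq (mu x) 0) => [->|nz]; first by rewrite !mul0r.
by rewrite ler_wpM2l // hf.
Qed.

Lemma W_lb u v alpha : (2 <= #|V|)%N -> 0 <= alpha -> alpha <= 1 ->
  hdist H w u v - 2 * ((1 - alpha) * M)
   <= wasserstein H w (mu_in H w alpha u) (mu_out H w alpha v).
Proof.
move=> hV a0 a1.
set mu := mu_in H w alpha u; set nu := mu_out H w alpha v.
rewrite /wasserstein; apply: lb_le_inf.
  exists (\sum_x \sum_y (mu x * nu y) * hdist H w x y), (fun x y => mu x * nu y).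
  split => //; split.
  - by move=> x y; rewrite mulr_ge0 ?mu_in_ge0 ?mu_out_ge0.
  - by move=> x; rewrite -mulr_sumr mu_out_sum // mulr1.
  - by move=> y; rewrite -mulr_suml mu_in_sum // mul1r.
move=> c [pi [[p0 pr pc] ->]].
have A : \sum_x \sum_y pi x y * hdist H w u x <= (1 - alpha) * M.
  have -> : \sum_x \sum_y pi x y * hdist H w u x = \sum_x mu x * hdist H w u x.
    by apply: eq_bigr => x _; rewrite -mulr_suml pr.
  apply: (wsum_le (u:=u)).
  - by move=> x; exact: mu_in_ge0.
  - exact: mu_in_sum.
  - by rewrite /mu /mu_in eqxx.
  - exact: d_xx.
  move=> x nx; rewrite /mu /mu_in (negbTE nx); case: ifP => [/Gamma_d [] //|_].
  by rewrite eqxx.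
have B : \sum_x \sum_y pi x y * hdist H w y v <= (1 - alpha) * M.
  rewrite exchange_big /=.
  have -> : \sum_y \sum_x pi x y * hdist H w y v = \sum_y nu y * hdist H w y v.
    by apply: eq_bigr => y _; rewrite -mulr_suml pc.
  apply: (wsum_le (u:=v)).
  - by move=> x; exact: mu_out_ge0.
  - exact: mu_out_sum.
  - by rewrite /nu /mu_out eqxx.
  - exact: d_xx.
  move=> x nx; rewrite /nu /mu_out (negbTE nx); case: ifP => [/Gamma_d [] //|_].
  by rewrite eqxx.
have C : \sum_x \sum_y pi x y = 1.
  by rewrite (eq_bigr _ (fun x _ => pr x)) mu_in_sum.
have T : \sum_x \sum_y pi x y * (hdist H w u v - hdist H w u x - hdist H w y v)
    <= \sum_x \sum_y pi x y * hdist H w x y.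
  apply: ler_sum => x _; apply: ler_sum => y _; apply: ler_wpM2l => //.
  have := d_tri u x v; have := d_tri x y v; lra.
have E : \sum_x \sum_y pi x y * (hdist H w u v - hdist H w u x - hdist H w y v)
   = hdist H w u v * (\sum_x \sum_y pi x y) - \sum_x \sum_y pi x y * hdist H w u x
     - \sum_x \sum_y pi x y * hdist H w y v.
  rewrite mulr_sumr -!sumrB; apply: eq_bigr => x _.
  rewrite mulr_sumr -!sumrB; apply: eq_bigr => y _; ring.
move: T; rewrite E C; lra.
Qed.

End S.

Theorem mainTheorem7 (R : realType) (V : finType)
    (H : {set hedge V}) (w : hedge V -> R) :
  is_woh H w -> strongly_connected H -> (2 <= #|V|)%N ->
  forall (u v : V) (alpha : R), u != v -> 0 <= alpha -> alpha < 1 ->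
  kappa H w alpha u v / (1 - alpha) <= 2 * max_weight H w / hdist H w u v.
Proof.
move=> hW hSC hV u v alpha nuv a0 a1.
have dpos : 0 < hdist H w u v := lt_le_trans (mw_pos hW) (d_gt hW hSC nuv).
have := W_lb hW hSC u v hV a0 (ltW a1).
rewrite /kappa /M.
set W := wasserstein _ _ _ _; set d := hdist H w u v; set Mx := max_weight H w => hWl.
have a1' : 0 < 1 - alpha by rewrite subr_gt0.
rewrite ler_pdivrMr //.
have -> : 1 - W / d = (d - W) / d by field; rewrite gt_eqF.
have -> : 2 * Mx / d * (1 - alpha) = (2 * ((1 - alpha) * Mx)) / d by field; rewrite gt_eqF.
rewrite ler_pM2r ?invr_gt0 //; lra.
Qed.
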